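(* Let $\mathbb{X}$ be a topological space with viable base $\Omega_0$, and $\mathbb{D}$ a bc-domain with basis $D_0$. Let $\mathcal{W}$ be the rounded ideal completion of $(\mathbb{B}_{\mathrm{abs}},\prec)$. Then $\mathcal{W}$ is order-isomorphic to $[\widehat{\mathbb{X}}_{\Omega_0}\to\mathbb{D}]$.
   Context: A viable base of $\mathbb{X}=(X,\tau_{\mathbb{X}})$ is a family $\Omega_0\subseteq\tau_{\mathbb{X}}$ closed under finite unions and finite intersections (so $\emptyset,X\in\Omega_0$) which is a base of $\tau_{\mathbb{X}}$. $\mathrm{Idl}(\Omega_0)$ is the complete lattice (under inclusion) of ideals (nonempty, downward closed, directed subsets) of $(\Omega_0,\subseteq)$. $\widehat{\mathbb{X}}_{\Omega_0}$ is the set of completely prime filters of $\mathrm{Idl}(\Omega_0)$ (nonempty upward closed sets closed under binary meets such that $\bigvee A\in F\Rightarrow A\cap F\neq\emptyset$), with the topology whose open sets are exactly $\mathcal{O}_I=\{y: I\in y\}$, $I\in\mathrm{Idl}(\Omega_0)$. A bc-domain is a continuous dcpo with least element $\bot$ in which bounded subsets have joins; $\ll$ is way-below; $\twoheaduparrow b=\{d: b\ll d\}$; a basis $D_0$ is a subset such that each $x$ is the directed join of $\{a\in D_0: a\ll x\}$. $[\widehat{\mathbb{X}}_{\Omega_0}\to\mathbb{D}]$ is the set of functions continuous into the Scott topology of $D$, ordered pointwise. $b\chi_O$ has value $b$ on $O$ and $\bot$ elsewhere; a family $\{b_i\chi_{O_i}\}_{i\in I}$ is consistent if for every $J\subseteq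 I$ with $\bigcap_{j\in J}O_j\neq\emptyset$ the $b_j$ ($j\in J$) have an upper bound. $\mathbb{B}_{\mathrm{abs}}$ is the set of functions $X\to D$ of the form $\bigsqcup_{i\in I}b_i\chi_{O_i}$ (pointwise join) with $I$ finite, the family consistent, $O_i\in\Omega_0$, $b_i\in D_0$; on it, $\bigsqcup_{i\in I}b_i\chi_{O_i}\prec h$ iff $O_i\subseteq h^{-1}(\twoheaduparrow b_i)$ for all $i\in I$. The rounded ideal completion of $(\mathbb{B}_{\mathrm{abs}},\prec)$ is the set of nonempty subsets $R\subseteq\mathbb{B}_{\mathrm{abs}}$ that are $\prec$-downward closed ($h\in R$, $h'\prec h\Rightarrow h'\in R$) and $\prec$-directed (for $h_1,h_2\in R$ there is $h\in R$ with $h_1\prec h$, $h_2\prec h$), ordered by inclusion. *)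

(* Defs.v *)
From Stdlib Require Import List.
Import ListNotations.

Definition subset {T : Type} (A B : T -> Prop) : Prop := forall x, A x -> B x.

Definition is_topology {X : Type} (opn : (X -> Prop) -> Prop) : Prop :=
  opn (fun _ => True) /\ opn (fun _ => False) /\
  (forall U V, opn U -> opn V -> opn (fun x => U x /\ V x)) /\
  (forall F : (X -> Prop) -> Prop, (forall U, F U -> opn U) ->
     opn (fun x => exists U, F U /\ U x)).

Definition viable_base {X : Type} (opn : (X -> Prop) -> Prop)
    (Om0 : (X -> Prop) -> Prop) : Prop :=
  (forall U, Om0 U -> opn U) /\
  Om0 (fun _ => False) /\ Om0 (fun _ => True) /\
  (forall U V, Om0 U -> Om0 V -> Om0 (fun x => U x \/ V x)) /\
  (forall U V, Om0 U -> Om0 V -> Om0 (fun x => U x /\ V x)) /\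
  (forall U, opn U -> forall x, U x -> exists B, Om0 B /\ B x /\ subset B U).

Definition is_ideal {X : Type} (Om0 : (X -> Prop) -> Prop)
    (I : (X -> Prop) -> Prop) : Prop :=
  (forall U, I U -> Om0 U) /\
  (exists U, I U) /\
  (forall U V, I U -> Om0 V -> subset V U -> I V) /\
  (forall U V, I U -> I V -> exists W, I W /\ subset U W /\ subset V W).

Definition is_join_Idl {X : Type} (Om0 : (X -> Prop) -> Prop)
    (A : ((X -> Prop) -> Prop) -> Prop) (J : (X -> Prop) -> Prop) : Prop :=
  is_ideal Om0 J /\ (forall I, A I -> subset I J) /\
  (forall K, is_ideal Om0 K -> (forall I, A I -> subset I K) -> subset J K).

Definition is_meet_Idl {X : Type} (Om0 : (X -> Prop) -> Prop)
    (I1 I2 M : (X -> Prop) -> Prop) : Prop :=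
  is_ideal Om0 M /\ subset M I1 /\ subset M I2 /\
  (forall K, is_ideal Om0 K -> subset K I1 -> subset K I2 -> subset K M).

Definition cp_filter {X : Type} (Om0 : (X -> Prop) -> Prop)
    (F : ((X -> Prop) -> Prop) -> Prop) : Prop :=
  (forall I, F I -> is_ideal Om0 I) /\
  (exists I, F I) /\
  (forall I J, F I -> is_ideal Om0 J -> subset I J -> F J) /\
  (forall I1 I2 M, F I1 -> F I2 -> is_meet_Idl Om0 I1 I2 M -> F M) /\
  (forall (A : ((X -> Prop) -> Prop) -> Prop) J,
     (forall I, A I -> is_ideal Om0 I) -> is_join_Idl Om0 A J -> F J ->
     exists I, A I /\ F I).

Definition Xhat {X : Type} (Om0 : (X -> Prop) -> Prop) : Type :=
  { F : ((X -> Prop) -> Prop) -> Prop | cp_filter Om0 F }.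

Definition Xhat_open {X : Type} (Om0 : (X -> Prop) -> Prop)
    (V : Xhat Om0 -> Prop) : Prop :=
  exists I, is_ideal Om0 I /\ forall y : Xhat Om0, V y <-> proj1_sig y I.

Section Domain.
Context {D : Type} (le : D -> D -> Prop).

Definition is_sup (S : D -> Prop) (s : D) : Prop :=
  (forall d, S d -> le d s) /\ (forall u, (forall d, S d -> le d u) -> le s u).

Definition directed (S : D -> Prop) : Prop :=
  (exists d, S d) /\
  (forall a b, S a -> S b -> exists c, S c /\ le a c /\ le b c).

Definition bounded (S : D -> Prop) : Prop := exists u, forall d, S d -> le d u.

Definition way_below (a b : D) : Prop :=
  forall S s, directed S -> is_sup S s -> le b s -> exists d, S d /\ le a d.

Definition bc_domain : Prop :=
  (forall x, le x x) /\
  (forall x y, le x y -> le y x -> x = y) /\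
  (forall x y z, le x y -> le y z -> le x z) /\
  (exists bot, forall x, le bot x) /\
  (forall S, directed S -> exists s, is_sup S s) /\
  (forall x, directed (fun a => way_below a x) /\ is_sup (fun a => way_below a x) x) /\
  (forall S, bounded S -> exists s, is_sup S s).

Definition is_basis (D0 : D -> Prop) : Prop :=
  forall x, directed (fun a => D0 a /\ way_below a x) /\
            is_sup (fun a => D0 a /\ way_below a x) x.

Definition scott_open (U : D -> Prop) : Prop :=
  (forall x y, U x -> le x y -> U y) /\
  (forall S s, directed S -> is_sup S s -> U s -> exists d, S d /\ U d).
End Domain.

Definition scott_cont {X D : Type} (Om0 : (X -> Prop) -> Prop)
    (le : D -> D -> Prop) (f : Xhat Om0 -> D) : Prop :=
  forall U, scott_open le U -> Xhat_open Om0 (fun y => U (f y)).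

Definition ContFun {X D : Type} (Om0 : (X -> Prop) -> Prop)
    (le : D -> D -> Prop) : Type :=
  { f : Xhat Om0 -> D | scott_cont Om0 le f }.

(* A finite family {b_i χ_{O_i}} is represented by a list of pairs (O_i, b_i). *)
Definition consistent {X D : Type} (le : D -> D -> Prop)
    (l : list ((X -> Prop) * D)) : Prop :=
  forall J : ((X -> Prop) * D) -> Prop,
    (forall p, J p -> In p l) ->
    (exists x, forall p, J p -> fst p x) ->
    bounded le (fun b => exists p, J p /\ b = snd p).

(* h is the pointwise join of the family l (the empty join being ⊥) *)
Definition represents {X D : Type} (le : D -> D -> Prop)
    (l : list ((X -> Prop) * D)) (h : X -> D) : Prop :=
  forall x, is_sup le (fun b => exists p, In p l /\ fst p x /\ b = snd p) (h x).

Definition B_abs_repr {X D : Type} (Om0 : (X -> Prop) -> Prop)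
    (le : D -> D -> Prop) (D0 : D -> Prop)
    (l : list ((X -> Prop) * D)) (h : X -> D) : Prop :=
  consistent le l /\
  (forall p, In p l -> Om0 (fst p) /\ D0 (snd p)) /\
  represents le l h.

Definition B_abs {X D : Type} (Om0 : (X -> Prop) -> Prop)
    (le : D -> D -> Prop) (D0 : D -> Prop) (h : X -> D) : Prop :=
  exists l, B_abs_repr Om0 le D0 l h.

Definition prec {X D : Type} (Om0 : (X -> Prop) -> Prop)
    (le : D -> D -> Prop) (D0 : D -> Prop) (g h : X -> D) : Prop :=
  exists l, B_abs_repr Om0 le D0 l g /\
    forall p, In p l -> forall x, fst p x -> way_below le (snd p) (h x).

Definition rounded_ideal {X D : Type} (Om0 : (X -> Prop) -> Prop)
    (le : D -> D -> Prop) (D0 : D -> Prop) (R : (X -> D) -> Prop) : Prop :=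
  (forall h, R h -> B_abs Om0 le D0 h) /\
  (exists h, R h) /\
  (forall h h', R h -> B_abs Om0 le D0 h' -> prec Om0 le D0 h' h -> R h') /\
  (forall h1 h2, R h1 -> R h2 ->
     exists h, R h /\ prec Om0 le D0 h1 h /\ prec Om0 le D0 h2 h).

Definition RIC {X D : Type} (Om0 : (X -> Prop) -> Prop)
    (le : D -> D -> Prop) (D0 : D -> Prop) : Type :=
  { R : (X -> D) -> Prop | rounded_ideal Om0 le D0 R }.

(* Main.v *)
Require Import Defs.
From mathcomp Require classical_sets.
From Stdlib Require Import List Classical FunctionalExtensionality PropExtensionality ProofIrrelevance ClassicalEpsilon.
Import ListNotations.

Section Main.
Variables (X : Type) (Om0 : (X -> Prop) -> Prop).
Hypothesis HL0 : Om0 (fun _ => False).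
Hypothesis HL1 : Om0 (fun _ => True).
Hypothesis HLU : forall U V, Om0 U -> Om0 V -> Om0 (fun x => U x \/ V x).
Hypothesis HLI : forall U V, Om0 U -> Om0 V -> Om0 (fun x => U x /\ V x).

Lemma set_ext {T : Type} (A B : T -> Prop) : (forall x, A x <-> B x) -> A = B.
Proof. intros H; apply functional_extensionality; intros x; apply propositional_extensionality; apply H. Qed.

Definition down (O : X -> Prop) : (X -> Prop) -> Prop := fun V => Om0 V /\ subset V O.

Lemma down_ideal O : Om0 O -> is_ideal Om0 (down O).
Proof.
  intros HO; split; [|split; [|split]].
  - intros U [HU _]; exact HU.
  - exists O; split; [exact HO| intros x h; exact h].
  - intros U V [HU1 HU2] HV Hs; split; [exact HV|intros x h; apply HU2, Hs, h].
  - intros U V [HU1 HU2] [HV1 HV2]. exists O; split; [split;[exact HO|intros x h; exact h]|].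
    split; assumption.
Qed.

Definition models (y : Xhat Om0) (O : X -> Prop) : Prop := proj1_sig y (down O).

Lemma cp_ideal (y : Xhat Om0) I : proj1_sig y I -> is_ideal Om0 I.
Proof. destruct y as [F HF]; simpl; apply (proj1 HF). Qed.

Lemma cp_up (y : Xhat Om0) I J : proj1_sig y I -> is_ideal Om0 J -> subset I J -> proj1_sig y J.
Proof. destruct y as [F HF]; simpl; apply (proj1 (proj2 (proj2 HF))). Qed.

Lemma cp_meet (y : Xhat Om0) I1 I2 M : proj1_sig y I1 -> proj1_sig y I2 -> is_meet_Idl Om0 I1 I2 M -> proj1_sig y M.
Proof. destruct y as [F HF]; simpl; apply (proj1 (proj2 (proj2 (proj2 HF)))). Qed.

Lemma cp_prime (y : Xhat Om0) A J : (forall I, A I -> is_ideal Om0 I) -> is_join_Idl Om0 A J -> proj1_sig y J ->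
  exists I, A I /\ proj1_sig y I.
Proof. destruct y as [F HF]; simpl; apply (proj2 (proj2 (proj2 (proj2 HF)))). Qed.

Lemma cp_ne (y : Xhat Om0) : exists I, proj1_sig y I.
Proof. destruct y as [F HF]; simpl; apply (proj1 (proj2 HF)). Qed.

Lemma models_up y O O' : models y O -> Om0 O' -> subset O O' -> models y O'.
Proof.
  intros H HO' Hs. apply (cp_up y (down O)); [exact H|apply down_ideal, HO'|].
  intros V [h1 h2]; split; [exact h1|intros x hx; apply Hs, h2, hx].
Qed.

Lemma models_False y : ~ models y (fun _ => False).
Proof.
  intros H. destruct (cp_prime y (fun _ => False) (down (fun _ => False))) as [I [[] _]].
  - intros I [].
  - split; [apply down_ideal, HL0|split].
    + intros I [].
    + intros K HK _ V [HV1 HV2]. destruct HK as [_ [[U HU] [Hd _]]].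
      apply (Hd U V HU HV1). intros x hx; destruct (HV2 x hx).
  - exact H.
Qed.

Lemma models_nonempty y O : models y O -> exists x, O x.
Proof.
  intros H. apply NNPP; intros Hn. apply (models_False y).
  apply (models_up y O); [exact H|exact HL0|].
  intros x hx; apply Hn; exists x; exact hx.
Qed.

Lemma models_True y : models y (fun _ => True).
Proof.
  destruct (cp_ne y) as [I HI]. apply (cp_up y I); [exact HI|apply down_ideal, HL1|].
  intros V HV. split; [exact (proj1 (cp_ideal y I HI) V HV)|intros x _; trivial].
Qed.

Lemma models_inter y O1 O2 : Om0 O1 -> Om0 O2 -> models y O1 -> models y O2 -> models y (fun x => O1 x /\ O2 x).
Proof.
  intros H1 H2 M1 M2. apply (cp_meet y (down O1) (down O2)); [exact M1|exact M2|].
  split; [apply down_ideal, HLI; assumption|split; [|split]].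
  - intros V [h1 h2]; split; [exact h1|intros x hx; apply (h2 x hx)].
  - intros V [h1 h2]; split; [exact h1|intros x hx; apply (h2 x hx)].
  - intros K HK s1 s2 V HV. destruct (s1 V HV) as [h1 h2]. destruct (s2 V HV) as [_ h3].
    split; [exact h1|intros x hx; split; [apply h2, hx|apply h3, hx]].
Qed.

Lemma models_union y O1 O2 : Om0 O1 -> Om0 O2 -> models y (fun x => O1 x \/ O2 x) -> models y O1 \/ models y O2.
Proof.
  intros H1 H2 M.
  destruct (cp_prime y (fun I => I = down O1 \/ I = down O2) (down (fun x => O1 x \/ O2 x))) as [I [[E|E] HI]].
  - intros I [E|E]; subst I; apply down_ideal; assumption.
  - split; [apply down_ideal, HLU; assumption|split].
    + intros I [E|E]; subst I; intros V [h1 h2]; split; [exact h1| |exact h1|]; intros x hx.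
      * left; apply h2, hx.
      * right; apply h2, hx.
    + intros K [HK1 [_ [HK3 HK4]]] Hs V [h1 h2].
      assert (K1 : K O1). { apply (Hs (down O1) (or_introl eq_refl)). split; [exact H1|intros x hx; exact hx]. }
      assert (K2 : K O2). { apply (Hs (down O2) (or_intror eq_refl)). split; [exact H2|intros x hx; exact hx]. }
      destruct (HK4 O1 O2 K1 K2) as [W [HW [s1 s2]]].
      apply (HK3 W V HW h1). intros x hx. destruct (h2 x hx) as [h|h]; [apply s1, h|apply s2, h].
  - exact M.
  - left; subst I; exact HI.
  - right; subst I; exact HI.
Qed.

Lemma cp_witness y I : proj1_sig y I -> exists V, I V /\ models y V.
Proof.
  intros HI. pose proof (cp_ideal y I HI) as [Hi1 [Hi2 [Hi3 Hi4]]].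
  destruct (cp_prime y (fun J => exists V, I V /\ J = down V) I) as [J [[V [HV E]] HJ]].
  - intros J [V [HV E]]; subst J; apply down_ideal, Hi1, HV.
  - split; [exact (cp_ideal y I HI)|split].
    + intros J [V [HV E]]; subst J. intros W [h1 h2]. apply (Hi3 V W HV h1 h2).
    + intros K HK Hs V HV. apply (Hs (down V)); [exists V; split; [exact HV|reflexivity]|].
      split; [apply Hi1, HV|intros x hx; exact hx].
  - exact HI.
  - subst J. exists V; split; assumption.
Qed.

Lemma cp_of_models y I V : is_ideal Om0 I -> I V -> models y V -> proj1_sig y I.
Proof.
  intros HI HV M. apply (cp_up y (down V)); [exact M|exact HI|].
  intros W [h1 h2]. destruct HI as [_ [_ [H3 _]]]. apply (H3 V W HV h1 h2).
Qed.

Definition ptfilt (P : (X -> Prop) -> Prop) : ((X -> Prop) -> Prop) -> Prop :=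
  fun I => is_ideal Om0 I /\ exists V, I V /\ ~ P V.

Lemma ptfilt_cp P : is_ideal Om0 P -> ~ P (fun _ => True) ->
  (forall V1 V2, Om0 V1 -> Om0 V2 -> ~ P V1 -> ~ P V2 -> ~ P (fun x => V1 x /\ V2 x)) ->
  cp_filter Om0 (ptfilt P).
Proof.
  intros HP HT Hpr. split; [|split; [|split; [|split]]].
  - intros I [h _]; exact h.
  - exists (down (fun _ => True)). split; [apply down_ideal, HL1|].
    exists (fun _ => True). split; [split; [exact HL1|intros x h; exact h]|exact HT].
  - intros I J [h [V [HV HnV]]] HJ Hs. split; [exact HJ|exists V; split; [apply Hs, HV|exact HnV]].
  - intros I1 I2 M [h1 [V1 [HV1 Hn1]]] [h2 [V2 [HV2 Hn2]]] [HM [s1 [s2 Hmax]]].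
    split; [exact HM|]. exists (fun x => V1 x /\ V2 x). split.
    + assert (L1 : Om0 V1) by (apply (proj1 h1), HV1).
      assert (L2 : Om0 V2) by (apply (proj1 h2), HV2).
      apply (Hmax (down (fun x => V1 x /\ V2 x))).
      * apply down_ideal, HLI; assumption.
      * intros W [w1 w2]. apply (proj1 (proj2 (proj2 h1)) V1 W HV1 w1). intros x hx; apply (w2 x hx).
      * intros W [w1 w2]. apply (proj1 (proj2 (proj2 h2)) V2 W HV2 w1). intros x hx; apply (w2 x hx).
      * split; [apply HLI; assumption|intros x hx; exact hx].
    + apply Hpr; auto. apply (proj1 h1), HV1. apply (proj1 h2), HV2.
  - intros A J HA [HJ [Hub Hlub]] [_ [V [HV HnV]]].
    apply NNPP; intros Hn. apply HnV.
    assert (S : subset J P).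
    { apply Hlub; [exact HP|]. intros I HAI W HW. apply NNPP; intros HnW. apply Hn.
      exists I; split; [exact HAI|]. split; [apply HA, HAI|exists W; split; assumption]. }
    apply S, HV.
Qed.

Lemma models_ptfilt P (H : cp_filter Om0 (ptfilt P)) O : is_ideal Om0 P -> Om0 O ->
  (models (exist _ (ptfilt P) H) O <-> ~ P O).
Proof.
  intros HP HO. unfold models; simpl. split.
  - intros [_ [V [[h1 h2] Hn]]] HPO. apply Hn. apply (proj1 (proj2 (proj2 HP)) O V HPO h1 h2).
  - intros Hn. split; [apply down_ideal, HO|]. exists O; split; [split; [exact HO|intros x h; exact h]|exact Hn].
Qed.

Definition Px (x : X) : (X -> Prop) -> Prop := fun W => Om0 W /\ ~ W x.

Lemma Px_cp x : cp_filter Om0 (ptfilt (Px x)).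
Proof.
  apply ptfilt_cp.
  - split; [|split; [|split]].
    + intros U [h _]; exact h.
    + exists (fun _ => False); split; [exact HL0|intros []].
    + intros U V [_ h] HV Hs; split; [exact HV|intros hx; apply h, Hs, hx].
    + intros U V [h1 h2] [h3 h4]. exists (fun x => U x \/ V x). split; [split; [apply HLU; assumption|]|].
      * intros [h|h]; auto.
      * split; intros z hz; auto.
  - intros [_ h]; apply h; trivial.
  - intros V1 V2 L1 L2 h1 h2 [_ h]. apply h; split.
    + apply NNPP; intros n; apply h1; split; assumption.
    + apply NNPP; intros n; apply h2; split; assumption.
Qed.

Definition ptx (x : X) : Xhat Om0 := exist _ (ptfilt (Px x)) (Px_cp x).

Lemma models_ptx x O : Om0 O -> (models (ptx x) O <-> O x).
Proof.
  intros HO. unfold ptx. rewrite models_ptfilt; [|split; [|split; [|split]]|exact HO].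
  - unfold Px; split; [intros h; apply NNPP; intros n; apply h; split; assumption|intros h [_ n]; exact (n h)].
  - intros U [h _]; exact h.
  - exists (fun _ => False); split; [exact HL0|intros []].
  - intros U V [_ h] HV Hs; split; [exact HV|intros hx; apply h, Hs, hx].
  - intros U V [h1 h2] [h3 h4]. exists (fun x => U x \/ V x). split; [split; [apply HLU; assumption|]|].
    + intros [h|h]; auto.
    + split; intros z hz; auto.
Qed.

Lemma my_zorn (T:Type) (P : (T->Prop)->Prop): (forall F : (T->Prop)->Prop, (forall A, F A -> P A) -> (forall A B, F A -> F B -> (forall x, A x -> B x) \/ (forall x, B x -> A x)) -> P (fun a => exists2 i, F i & i a)) -> exists A, P A /\ forall B, (forall x, A x -> B x) -> ~ (forall x, B x -> A x) -> ~ P B.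
Proof.
intros H. destruct (@classical_sets.Zorn_bigcup T P) as [A [HA HB]].
- intros F HF Ht. apply H. exact HF. exact Ht.
- exists A. split. exact HA. intros B H1 H2. apply HB. split; assumption.
Qed.

Lemma PF K0 O : is_ideal Om0 K0 -> Om0 O -> K0 O \/ exists y, models y O /\ ~ proj1_sig y K0.
Proof.
  intros HK0 HO. destruct (classic (K0 O)) as [h|hn]; [left; exact h|right].
  destruct (my_zorn (X -> Prop) (fun K => (forall V, ~ K V) \/ (is_ideal Om0 K /\ subset K0 K /\ ~ K O)))
    as [A [HA Hmax]].
  - intros F HF Htot.
    destruct (classic (exists a, exists2 i, F i & i a)) as [[a [i Fi ia]]|Hne]; [right|left].
    + assert (Ii : is_ideal Om0 i /\ subset K0 i /\ ~ i O).
      { destruct (HF i Fi) as [E|E]; [destruct (E a ia)|exact E]. }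
      assert (memI : forall j b, F j -> j b -> is_ideal Om0 j /\ subset K0 j /\ ~ j O).
      { intros j b Fj jb. destruct (HF j Fj) as [E|E]; [destruct (E b jb)|exact E]. }
      split; [split; [|split; [|split]]|split].
      * intros U [j Fj jU]. apply (proj1 (proj1 (memI j U Fj jU))), jU.
      * exists a; exists i; assumption.
      * intros U V [j Fj jU] HV Hs. exists j; [exact Fj|].
        apply (proj1 (proj2 (proj2 (proj1 (memI j U Fj jU)))) U V jU HV Hs).
      * intros U V [j Fj jU] [k Fk kV].
        destruct (Htot j k Fj Fk) as [S|S].
        -- destruct (proj2 (proj2 (proj2 (proj1 (memI k V Fk kV)))) U V (S U jU) kV) as [W [kW sW]].
           exists W; split; [exists k; assumption|exact sW].
        -- destruct (proj2 (proj2 (proj2 (proj1 (memI j U Fj jU)))) U V jU (S V kV)) as [W [jW sW]].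
           exists W; split; [exists j; assumption|exact sW].
      * intros U hU. exists i; [exact Fi|apply (proj1 (proj2 Ii)), hU].
      * intros [j Fj jO]. apply (proj2 (proj2 (memI j O Fj jO))), jO.
    + intros V [j Fj jV]. apply Hne. exists V; exists j; assumption.
  - assert (HAi : is_ideal Om0 A /\ subset K0 A /\ ~ A O).
    { destruct HA as [E|E]; [|exact E]. exfalso.
      apply (Hmax K0).
      + intros x hx; destruct (E x hx).
      + intros S. destruct HK0 as [_ [[U HU] _]]. apply (E U), S, HU.
      + right; split; [exact HK0|split; [intros x h; exact h|exact hn]]. }
    destruct HAi as [HAid [HsA HnA]].
    destruct HAid as [A1 [A2 [A3 A4]]].
    assert (AU : forall U V, A U -> A V -> A (fun x => U x \/ V x)).
    { intros U V hU hV. destruct (A4 U V hU hV) as [W [hW [s1 s2]]].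
      apply (A3 W); [exact hW|apply HLU; apply A1; assumption|].
      intros x [h|h]; [apply s1, h|apply s2, h]. }
    assert (Aprime : forall V1 V2, Om0 V1 -> Om0 V2 -> ~ A V1 -> ~ A V2 -> ~ A (fun x => V1 x /\ V2 x)).
    { intros V1 V2 L1 L2 n1 n2 h12.
      assert (step : forall V, Om0 V -> ~ A V -> exists k, A k /\ subset O (fun x => k x \/ V x)).
      { intros V LV nV. apply NNPP; intros Hno.
        apply (Hmax (fun W => Om0 W /\ exists k, A k /\ subset W (fun x => k x \/ V x))).
        - intros W hW. split; [apply A1, hW|exists W; split; [exact hW|intros x h; left; exact h]].
        - intros S. apply nV. apply S.
          split; [exact LV|]. destruct A2 as [k hk]. exists k; split; [exact hk|intros x h; right; exact h].
        - right. split; [split; [|split; [|split]]|split].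
          + intros U [h _]; exact h.
          + exists V; split; [exact LV|]. destruct A2 as [k hk]. exists k; split; [exact hk|intros x h; right; exact h].
          + intros U W [hU [k [hk s]]] LW sW. split; [exact LW|exists k; split; [exact hk|intros x h; apply s, sW, h]].
          + intros U W [hU [k1 [hk1 s1]]] [hW [k2 [hk2 s2]]].
            exists (fun x => U x \/ W x). split; [split; [apply HLU; assumption|]|].
            * exists (fun x => k1 x \/ k2 x). split; [apply AU; assumption|].
              intros x [h|h]; [destruct (s1 x h) as [h'|h']|destruct (s2 x h) as [h'|h']]; auto.
            * split; intros x h; auto.
          + intros W hW. split; [apply A1, HsA, hW|exists W; split; [apply HsA, hW|intros x h; left; exact h]].
          + intros [_ [k [hk s]]]. apply Hno. exists k; split; assumption. }
      destruct (step V1 L1 n1) as [k1 [hk1 s1]]. destruct (step V2 L2 n2) as [k2 [hk2 s2]].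
      apply HnA. apply (A3 (fun x => (k1 x \/ k2 x) \/ (V1 x /\ V2 x))).
      - apply AU; [apply AU; assumption|exact h12].
      - exact HO.
      - intros x hx. destruct (s1 x hx) as [h|h]; [left; left; exact h|].
        destruct (s2 x hx) as [h'|h']; [left; right; exact h'|right; split; assumption]. }
    assert (HP : is_ideal Om0 A) by (split; [exact A1|split; [exact A2|split; assumption]]).
    assert (HT : ~ A (fun _ => True)).
    { intros h. apply HnA. apply (A3 _ O h HO). intros x _; trivial. }
    pose (H := ptfilt_cp A HP HT Aprime).
    exists (exist _ (ptfilt A) H). split.
    + apply (proj2 (models_ptfilt A H O HP HO)). exact HnA.
    + simpl. intros [_ [V [hV nV]]]. apply nV, HsA, hV.
Qed.

Variables (D : Type) (le : D -> D -> Prop) (D0 : D -> Prop) (bot : D).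
Hypothesis Hrefl : forall x, le x x.
Hypothesis Hanti : forall x y, le x y -> le y x -> x = y.
Hypothesis Htrans : forall x y z, le x y -> le y z -> le x z.
Hypothesis Hbot : forall x, le bot x.
Hypothesis Hdsup : forall S, directed le S -> exists s, is_sup le S s.
Hypothesis Hbsup : forall S, bounded le S -> exists s, is_sup le S s.
Hypothesis Hbas : is_basis le D0.

Lemma wb_le a b : way_below le a b -> le a b.
Proof.
  intros H. destruct (H (fun d => d = b) b) as [d [E Hd]].
  - split; [exists b; reflexivity|intros a1 b1 E1 E2; subst; exists b; split; [reflexivity|split; apply Hrefl]].
  - split; [intros d E; subst; apply Hrefl|intros u Hu; apply Hu; reflexivity].
  - apply Hrefl.
  - subst; exact Hd.
Qed.

Lemma wb_mono a' a b b' : le a' a -> way_below le a b -> le b b' -> way_below le a' b'.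
Proof.
  intros H1 H2 H3 S s HS Hs Hb. destruct (H2 S s HS Hs (Htrans _ _ _ H3 Hb)) as [d [Sd Hd]].
  exists d; split; [exact Sd|apply (Htrans _ _ _ H1 Hd)].
Qed.

Lemma sup_unique S s t : is_sup le S s -> is_sup le S t -> s = t.
Proof. intros [h1 h2] [h3 h4]. apply Hanti; [apply h2, h3|apply h4, h1]. Qed.

Lemma basis_interp a b : way_below le a b -> exists c, D0 c /\ way_below le a c /\ way_below le c b.
Proof.
  intros H.
  pose (S := fun d => D0 d /\ exists c, D0 c /\ way_below le d c /\ way_below le c b).
  assert (HS : directed le S /\ is_sup le S b).
  { destruct (Hbas b) as [[[c0 [Dc0 Wc0]] Hd] [Hub Hlub]]. split; [split|split].
    - destruct (Hbas c0) as [[[d0 [Dd0 Wd0]] _] _]. exists d0. split; [exact Dd0|exists c0; auto].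
    - intros d1 d2 [D1 [c1 [Dc1 [W1 W1']]]] [D2 [c2 [Dc2 [W2 W2']]]].
      destruct (Hd c1 c2 (conj Dc1 W1') (conj Dc2 W2')) as [c [[Dc Wc] [l1 l2]]].
      destruct (Hbas c) as [[Hne Hdc] Hsc].
      destruct (W1 _ _ (proj1 (Hbas c1)) (proj2 (Hbas c1)) (Hrefl c1)) as [e1 [[De1 We1] le1]].
      destruct (W2 _ _ (proj1 (Hbas c2)) (proj2 (Hbas c2)) (Hrefl c2)) as [e2 [[De2 We2] le2]].
      assert (G1 : way_below le e1 c) by (apply (wb_mono e1 e1 c1 c); auto).
      assert (G2 : way_below le e2 c) by (apply (wb_mono e2 e2 c2 c); auto).
      destruct (Hdc e1 e2 (conj De1 G1) (conj De2 G2)) as [e [[De We] [m1 m2]]].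
      exists e. split; [split; [exact De|exists c; auto]|split; eapply Htrans; eauto].
    - intros d [Dd [c [Dc [W1 W2]]]]. apply (Htrans _ c); apply wb_le; assumption.
    - intros u Hu. apply Hlub. intros c [Dc Wc]. destruct (Hbas c) as [_ [_ Hl]].
      apply Hl. intros e [De We]. apply Hu. split; [exact De|exists c; auto]. }
  destruct HS as [HSd HSs]. destruct (H S b HSd HSs (Hrefl b)) as [d [[Dd [c [Dc [W1 W2]]]] Hd]].
  exists c. split; [exact Dc|split; [apply (wb_mono a d c c); auto|exact W2]].
Qed.

Lemma wb_dir S s a : directed le S -> is_sup le S s -> way_below le a s -> exists d, S d /\ way_below le a d.
Proof.
  intros HS Hs H. destruct (basis_interp a s H) as [c [_ [W1 W2]]].
  destruct (W2 S s HS Hs (Hrefl s)) as [d [Sd Hd]]. exists d; split; [exact Sd|].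
  apply (wb_mono a a c d); auto.
Qed.

Lemma wb_open c : scott_open le (fun d => way_below le c d).
Proof.
  split.
  - intros x y H1 H2. apply (wb_mono c c x y); auto.
  - intros S s HS Hs H. apply (wb_dir S s c); assumption.
Qed.

Definition sp (S : D -> Prop) : D := epsilon (inhabits bot) (is_sup le S).

Lemma sp_spec S : (exists s, is_sup le S s) -> is_sup le S (sp S).
Proof. intros H. unfold sp. apply epsilon_spec, H. Qed.

Definition LL (l : list ((X -> Prop) * D)) := forall p, In p l -> Om0 (fst p).

Lemma LL_cons a l : LL (a :: l) -> Om0 (fst a) /\ LL l.
Proof. intros H; split; [apply H; left; reflexivity|intros p h; apply H; right; exact h]. Qed.

Lemma list_union (l : list ((X -> Prop) * D)) (Q : (X -> Prop) * D -> Prop) :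
  LL l -> Om0 (fun x => exists p, In p l /\ Q p /\ fst p x).
Proof.
  induction l as [|a l IH]; intros H.
  - replace (fun x => exists p, In p [] /\ Q p /\ fst p x) with (fun _ : X => False); [exact HL0|].
    apply set_ext; intros x; split; [intros []|intros [p [[] _]]].
  - destruct (LL_cons a l H) as [Ha Hl]. destruct (classic (Q a)) as [q|nq].
    + replace (fun x => exists p, In p (a :: l) /\ Q p /\ fst p x)
        with (fun x => fst a x \/ (exists p, In p l /\ Q p /\ fst p x)); [apply HLU; auto|].
      apply set_ext; intros x; split.
      * intros [h|[p [h1 h2]]]; [exists a; split; [left; reflexivity|auto]|exists p; split; [right; exact h1|exact h2]].
      * intros [p [[E|h1] h2]]; [subst; left; apply h2|right; exists p; auto].
    + replace (fun x => exists p, In p (a :: l) /\ Q p /\ fst p x)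
        with (fun x => (exists p, In p l /\ Q p /\ fst p x)); [apply IH; auto|].
      apply set_ext; intros x; split.
      * intros [p [h1 h2]]; exists p; split; [right; exact h1|exact h2].
      * intros [p [[E|h1] h2]]; [subst; destruct (nq (proj1 h2))|exists p; auto].
Qed.

Lemma models_union_list y (l : list ((X -> Prop) * D)) (Q : (X -> Prop) * D -> Prop) :
  LL l -> models y (fun x => exists p, In p l /\ Q p /\ fst p x) -> exists p, In p l /\ Q p /\ models y (fst p).
Proof.
  induction l as [|a l IH]; intros H M.
  - exfalso. apply (models_False y). apply (models_up y _ _ M HL0). intros x [p [[] _]].
  - destruct (LL_cons a l H) as [Ha Hl]. destruct (classic (Q a)) as [q|nq].
    + assert (M' : models y (fun x => fst a x \/ (exists p, In p l /\ Q p /\ fst p x))).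
      { apply (models_up y _ _ M); [apply HLU; [exact Ha|apply list_union, Hl]|].
        intros x [p [[E|h1] h2]]; [subst; left; apply h2|right; exists p; auto]. }
      destruct (models_union y _ _ Ha (list_union l Q Hl) M') as [h|h].
      * exists a; split; [left; reflexivity|auto].
      * destruct (IH Hl h) as [p [h1 h2]]; exists p; split; [right; exact h1|exact h2].
    + assert (M' : models y (fun x => exists p, In p l /\ Q p /\ fst p x)).
      { apply (models_up y _ _ M); [apply list_union, Hl|].
        intros x [p [[E|h1] h2]]; [subst; destruct (nq (proj1 h2))|exists p; auto]. }
      destruct (IH Hl M') as [p [h1 h2]]; exists p; split; [right; exact h1|exact h2].
Qed.

Lemma list_inter y (l : list ((X -> Prop) * D)) (Q : (X -> Prop) * D -> Prop) : LL l ->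
  forall O, Om0 O -> models y O -> (forall p, In p l -> Q p -> models y (fst p)) ->
  Om0 (fun x => O x /\ forall p, In p l -> Q p -> fst p x) /\
  models y (fun x => O x /\ forall p, In p l -> Q p -> fst p x).
Proof.
  induction l as [|a l IH]; intros H O HO M HQ.
  - replace (fun x => O x /\ forall p, In p [] -> Q p -> fst p x) with O; [auto|].
    apply set_ext; intros x; split; [intros h; split; [exact h|intros p []]|intros [h _]; exact h].
  - destruct (LL_cons a l H) as [Ha Hl]. destruct (classic (Q a)) as [q|nq].
    + replace (fun x => O x /\ forall p, In p (a :: l) -> Q p -> fst p x)
        with (fun x => (fun z => O z /\ fst a z) x /\ forall p, In p l -> Q p -> fst p x).
      * apply IH; [exact Hl|apply HLI; auto|apply models_inter; auto; apply HQ; [left; reflexivity|exact q]|].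
        intros p h1 h2; apply HQ; [right; exact h1|exact h2].
      * apply set_ext; intros x; split.
        -- intros [[h1 h2] h3]; split; [exact h1|intros p [E|hp] hq; [subst; exact h2|auto]].
        -- intros [h1 h2]; split; [split; [exact h1|apply h2; [left; reflexivity|exact q]]|intros p hp hq; apply h2; [right; exact hp|exact hq]].
    + replace (fun x => O x /\ forall p, In p (a :: l) -> Q p -> fst p x)
        with (fun x => O x /\ forall p, In p l -> Q p -> fst p x).
      * apply IH; auto. intros p h1 h2; apply HQ; [right; exact h1|exact h2].
      * apply set_ext; intros x; split.
        -- intros [h1 h2]; split; [exact h1|intros p [E|hp] hq; [subst; destruct (nq hq)|auto]].
        -- intros [h1 h2]; split; [exact h1|intros p hp hq; apply h2; [right; exact hp|exact hq]].
Qed.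

Lemma generic y O (l : list ((X -> Prop) * D)) : LL l -> Om0 O -> models y O ->
  exists x0 O', Om0 O' /\ models y O' /\ subset O' O /\ O' x0 /\
    (forall p, In p l -> models y (fst p) -> subset O' (fst p)) /\
    (forall p, In p l -> fst p x0 -> models y (fst p)).
Proof.
  intros Hl HO M.
  destruct (list_inter y l (fun p => models y (fst p)) Hl O HO M (fun p _ h => h)) as [L' M'].
  set (O' := fun x => O x /\ forall p, In p l -> models y (fst p) -> fst p x) in *.
  assert (E : exists x0, O' x0 /\ forall p, In p l -> fst p x0 -> models y (fst p)).
  { apply NNPP; intros Hn.
    assert (M2 : models y (fun x => exists p, In p l /\ ~ models y (fst p) /\ fst p x)).
    { apply (models_up y O' _ M' (list_union l _ Hl)). intros x hx.
      apply NNPP; intros n. apply Hn. exists x; split; [exact hx|].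
      intros p hp hpx. apply NNPP; intros nm. apply n. exists p; auto. }
    destruct (models_union_list y l _ Hl M2) as [p [_ [h1 h2]]]. exact (h1 h2). }
  destruct E as [x0 [Hx0 Hgen]]. exists x0, O'.
  split; [exact L'|split; [exact M'|split; [intros x [h _]; exact h|split; [exact Hx0|split; [|exact Hgen]]]]].
  intros p hp hm x [_ h]. apply h; assumption.
Qed.

Definition repr_L l g := B_abs_repr Om0 le D0 l g.

Lemma repr_LL l g : repr_L l g -> LL l.
Proof. intros [_ [H _]] p hp. apply (proj1 (H p hp)). Qed.

Lemma value_le l g x0 e : repr_L l g -> (forall p, In p l -> fst p x0 -> le (snd p) e) -> le (g x0) e.
Proof.
  intros [_ [_ Hr]] H. destruct (Hr x0) as [_ Hl]. apply Hl. intros d [p [h1 [h2 E]]]; subst; auto.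
Qed.

Lemma value_ge l g x p : repr_L l g -> In p l -> fst p x -> le (snd p) (g x).
Proof. intros [_ [_ Hr]] h1 h2. destruct (Hr x) as [Hu _]. apply Hu. exists p; auto. Qed.

Lemma generic_mono y O' l g x0 : repr_L l g ->
  (forall p, In p l -> models y (fst p) -> subset O' (fst p)) ->
  (forall p, In p l -> fst p x0 -> models y (fst p)) ->
  forall x, O' x -> le (g x0) (g x).
Proof.
  intros Hr H1 H2 x hx. apply (value_le l); [exact Hr|]. intros p hp hpx.
  apply (value_ge l g x p Hr hp). apply (H1 p hp (H2 p hp hpx)), hx.
Qed.

Definition SR (R : (X -> D) -> Prop) (y : Xhat Om0) : D -> Prop :=
  fun d => exists h, R h /\ exists O, Om0 O /\ models y O /\ forall x, O x -> le d (h x).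

Lemma prec_le g h : prec Om0 le D0 g h -> forall x, le (g x) (h x).
Proof.
  intros [l [Hr H]] x. apply (value_le l); [exact Hr|]. intros p hp hx; apply wb_le, H; auto.
Qed.

Lemma SR_dir R y : rounded_ideal Om0 le D0 R -> directed le (SR R y).
Proof.
  intros [R1 [[h0 Rh0] [R3 R4]]]. split.
  - exists bot. exists h0. split; [exact Rh0|]. exists (fun _ => True).
    split; [exact HL1|split; [apply models_True|intros x _; apply Hbot]].
  - intros d1 d2 [h1 [Rh1 [O1 [L1 [M1 S1]]]]] [h2 [Rh2 [O2 [L2 [M2 S2]]]]].
    destruct (R4 h1 h2 Rh1 Rh2) as [h [Rh [P1 P2]]].
    pose proof (models_inter y O1 O2 L1 L2 M1 M2) as M.
    destruct (models_nonempty y _ M) as [x0 [a1 a2]].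
    destruct (Hbsup (fun d => d = d1 \/ d = d2)) as [j [ju jl]].
    { exists (h x0). intros d [E|E]; subst.
      - apply (Htrans _ (h1 x0)); [apply S1, a1|apply prec_le, P1].
      - apply (Htrans _ (h2 x0)); [apply S2, a2|apply prec_le, P2]. }
    exists j. split; [|split; apply ju; auto].
    exists h. split; [exact Rh|]. exists (fun x => O1 x /\ O2 x).
    split; [apply HLI; auto|split; [exact M|]].
    intros x [b1 b2]. apply jl. intros d [E|E]; subst.
    + apply (Htrans _ (h1 x)); [apply S1, b1|apply prec_le, P1].
    + apply (Htrans _ (h2 x)); [apply S2, b2|apply prec_le, P2].
Qed.

Definition phiv (R : (X -> D) -> Prop) (y : Xhat Om0) : D := sp (SR R y).

Lemma phiv_sup R y : rounded_ideal Om0 le D0 R -> is_sup le (SR R y) (phiv R y).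
Proof. intros H. apply sp_spec, Hdsup, SR_dir, H. Qed.

Lemma phi_cont R : rounded_ideal Om0 le D0 R -> scott_cont Om0 le (phiv R).
Proof.
  intros HR U [Uup Uin].
  exists (fun V => Om0 V /\ forall y, models y V -> U (phiv R y)). split.
  - split; [|split; [|split]].
    + intros V [h _]; exact h.
    + exists (fun _ => False). split; [exact HL0|intros y M; destruct (models_False y M)].
    + intros V W [LV HV] LW Hs. split; [exact LW|intros y M; apply HV, (models_up y W V M LV Hs)].
    + intros V W [LV HV] [LW HW]. exists (fun x => V x \/ W x).
      split; [split; [apply HLU; auto|]|split; intros x h; auto].
      intros y M. destruct (models_union y V W LV LW M) as [h|h]; auto.
  - intros y. split.
    + intros Hu. destruct (Uin (SR R y) (phiv R y) (SR_dir R y HR) (phiv_sup R y HR) Hu)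
        as [d [[h [Rh [O [LO [MO SO]]]]] Ud]].
      apply (cp_of_models y _ O); [|split; [exact LO|]|exact MO].
      * split; [|split; [|split]].
        -- intros V [h' _]; exact h'.
        -- exists (fun _ => False). split; [exact HL0|intros y' M; destruct (models_False y' M)].
        -- intros V W [LV HV] LW Hs. split; [exact LW|intros y' M; apply HV, (models_up y' W V M LV Hs)].
        -- intros V W [LV HV] [LW HW]. exists (fun x => V x \/ W x).
           split; [split; [apply HLU; auto|]|split; intros x h'; auto].
           intros y' M. destruct (models_union y' V W LV LW M) as [h'|h']; auto.
      * intros y' M. apply (Uup d); [exact Ud|]. apply (proj1 (phiv_sup R y' HR)).
        exists h; split; [exact Rh|exists O; auto].
    + intros Hy. destruct (cp_witness y _ Hy) as [V [[LV HV] M]]. apply HV, M.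
Qed.

Definition tri (g : X -> D) (F : Xhat Om0 -> D) : Prop :=
  exists l, repr_L l g /\ forall p, In p l -> forall y, models y (fst p) -> way_below le (snd p) (F y).

Lemma tri_of_R R g : rounded_ideal Om0 le D0 R -> R g -> tri g (phiv R).
Proof.
  intros HR Rg. pose proof HR as [R1 [R2 [R3 R4]]].
  destruct (R4 g g Rg Rg) as [h [Rh [[l [Hr Hw]] _]]].
  exists l. split; [exact Hr|]. intros p hp y M.
  destruct (R1 h Rh) as [lh Hrh].
  destruct (generic y (fst p) lh (repr_LL lh h Hrh) (repr_LL l g Hr p hp) M)
    as [x0 [O' [L' [M' [S' [Hx0 [G1 G2]]]]]]].
  apply (wb_mono (snd p) (snd p) (h x0) (phiv R y)); [apply Hrefl|apply Hw; auto|].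
  apply (proj1 (phiv_sup R y HR)). exists h. split; [exact Rh|]. exists O'.
  split; [exact L'|split; [exact M'|]]. apply (generic_mono y O' lh h x0 Hrh G1 G2).
Qed.

Lemma R_of_tri R g : rounded_ideal Om0 le D0 R -> tri g (phiv R) -> R g.
Proof.
  intros HR [l [Hr Hw]]. pose proof HR as [R1 [R2 [R3 R4]]].
  assert (Hh : exists h, R h /\ forall p, In p l -> forall x, fst p x -> way_below le (snd p) (h x)).
  { assert (HLl := repr_LL l g Hr). clear Hr.
    induction l as [|a l IH].
    - destruct R2 as [h Rh]. exists h; split; [exact Rh|intros p []].
    - destruct (LL_cons a l HLl) as [La Ll].
      destruct IH as [h1 [Rh1 H1]]; [intros p hp; apply Hw; right; exact hp|exact Ll|].
      set (b := snd a). set (O := fst a).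
      set (K := fun V => Om0 V /\ exists h, R h /\ forall x, V x -> way_below le b (h x)).
      assert (HK : is_ideal Om0 K).
      { split; [|split; [|split]].
        - intros V [h _]; exact h.
        - exists (fun _ => False). split; [exact HL0|exists h1; split; [exact Rh1|intros x []]].
        - intros V W [LV [h [Rh Hv]]] LW Hs. split; [exact LW|exists h; split; [exact Rh|intros x hx; apply Hv, Hs, hx]].
        - intros V W [LV [h [Rh Hv]]] [LW [h' [Rh' Hv']]].
          destruct (R4 h h' Rh Rh') as [k [Rk [P1 P2]]].
          exists (fun x => V x \/ W x). split; [split; [apply HLU; auto|]|split; intros x hx; auto].
          exists k. split; [exact Rk|]. intros x [hx|hx].
          + apply (wb_mono b b (h x) (k x)); [apply Hrefl|auto|apply prec_le, P1].
          + apply (wb_mono b b (h' x) (k x)); [apply Hrefl|auto|apply prec_le, P2]. }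
      destruct (PF K O HK La) as [[_ [h2 [Rh2 H2]]]|[y [M Hn]]].
      + destruct (R4 h1 h2 Rh1 Rh2) as [k [Rk [P1 P2]]]. exists k. split; [exact Rk|].
        intros p [E|hp] x hx.
        * subst p. apply (wb_mono b b (h2 x) (k x)); [apply Hrefl|auto|apply prec_le, P2].
        * apply (wb_mono (snd p) (snd p) (h1 x) (k x)); [apply Hrefl|auto|apply prec_le, P1].
      + exfalso. apply Hn.
        assert (W : way_below le b (phiv R y)) by (apply Hw; [left; reflexivity|exact M]).
        destruct (wb_dir _ _ b (SR_dir R y HR) (phiv_sup R y HR) W) as [d [[h [Rh [V [LV [MV SV]]]]] Wd]].
        apply (cp_of_models y K V HK); [|exact MV].
        split; [exact LV|exists h; split; [exact Rh|intros x hx; apply (wb_mono b b d (h x)); auto]]. }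
  destruct Hh as [h [Rh Hh]]. apply (R3 h g Rh); [exists l; exact Hr|exists l; split; [exact Hr|exact Hh]].
Qed.

Definition stepf (m : list ((X -> Prop) * D)) (x : X) : D :=
  sp (fun b => exists p, In p m /\ fst p x /\ b = snd p).

Lemma stepf_repr m : consistent le m -> (forall p, In p m -> Om0 (fst p) /\ D0 (snd p)) -> repr_L m (stepf m).
Proof.
  intros Hc Hm. split; [exact Hc|split; [exact Hm|]]. intros x. apply sp_spec, Hbsup.
  destruct (Hc (fun p => In p m /\ fst p x)) as [u Hu].
  - intros p [h _]; exact h.
  - exists x; intros p [_ h]; exact h.
  - exists u. intros d [p [h1 [h2 E]]]. apply Hu. exists p; auto.
Qed.

Lemma stepf_ge m x p : consistent le m -> (forall p, In p m -> Om0 (fst p) /\ D0 (snd p)) ->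
  In p m -> fst p x -> le (snd p) (stepf m x).
Proof. intros Hc Hm hp hx. apply (value_ge m); auto. apply stepf_repr; auto. Qed.

Section PsiPart.
Variable f : Xhat Om0 -> D.
Hypothesis Hf : scott_cont Om0 le f.

Lemma cont_wb c y : way_below le c (f y) ->
  exists V, Om0 V /\ models y V /\ forall y', models y' V -> way_below le c (f y').
Proof.
  intros W. destruct (Hf _ (wb_open c)) as [I [HI HE]].
  destruct (cp_witness y I (proj1 (HE y) W)) as [V [IV M]].
  exists V. split; [apply (proj1 HI), IV|split; [exact M|]].
  intros y' M'. apply (proj2 (HE y')). apply (cp_of_models y' I V HI IV M').
Qed.

Definition psiR : (X -> D) -> Prop := fun g => tri g f.

Lemma C1 y d : SR psiR y d -> le d (f y).
Proof.
  intros [g [[l [Hr Hw]] [O [LO [MO SO]]]]].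
  destruct (generic y O l (repr_LL l g Hr) LO MO) as [x0 [O' [L' [M' [S' [Hx0 [G1 G2]]]]]]].
  apply (Htrans _ (g x0)); [apply SO, S', Hx0|].
  apply (value_le l); [exact Hr|]. intros p hp hx. apply wb_le, Hw; auto.
Qed.

Lemma C2 y : directed le (SR psiR y) -> le (f y) (phiv psiR y).
Proof.
  intros Hd. pose proof (sp_spec _ (Hdsup _ Hd)) as Hs. fold (phiv psiR y) in Hs.
  destruct (Hbas (f y)) as [_ [_ Hl]]. apply Hl. intros a [Da Wa].
  destruct (cont_wb a y Wa) as [V [LV [MV HV]]].
  assert (Hm : forall p, In p [(V, a)] -> Om0 (fst p) /\ D0 (snd p)).
  { intros p [E|[]]; subst; simpl; auto. }
  assert (Hc : consistent le [(V, a)]).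
  { intros J HJ _. exists a. intros b [p [Jp E]]. destruct (HJ p Jp) as [E'|[]]; subst; apply Hrefl. }
  apply (proj1 Hs). exists (stepf [(V, a)]). split.
  - exists [(V, a)]. split; [apply stepf_repr; auto|]. intros p [E|[]] y' M; subst; simpl in *; auto.
  - exists V. split; [exact LV|split; [exact MV|]]. intros x hx.
    apply (stepf_ge [(V, a)] x (V, a)); auto. left; reflexivity.
Qed.

Definition Good (m : list ((X -> Prop) * D)) :=
  forall q, In q m -> Om0 (fst q) /\ D0 (snd q) /\ forall y, models y (fst q) -> way_below le (snd q) (f y).

Lemma Good_app m1 m2 : Good m1 -> Good m2 -> Good (m1 ++ m2).
Proof. intros h1 h2 q hq. destruct (in_app_or _ _ _ hq); auto. Qed.

Lemma CL O b : Om0 O -> (forall y, models y O -> way_below le b (f y)) ->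
  exists m, Good m /\ forall x, O x -> exists q, In q m /\ fst q x /\ way_below le b (snd q).
Proof.
  intros LO H.
  set (K := fun V => Om0 V /\ exists m, Good m /\ forall x, V x -> exists q, In q m /\ fst q x /\ way_below le b (snd q)).
  assert (HK : is_ideal Om0 K).
  { split; [|split; [|split]].
    - intros V [h _]; exact h.
    - exists (fun _ => False). split; [exact HL0|exists []; split; [intros q []|intros x []]].
    - intros V W [LV [m [Gm Hm]]] LW Hs. split; [exact LW|exists m; split; [exact Gm|intros x hx; apply Hm, Hs, hx]].
    - intros V W [LV [m1 [G1 H1]]] [LW [m2 [G2 H2]]]. exists (fun x => V x \/ W x).
      split; [split; [apply HLU; auto|]|split; intros x hx; auto].
      exists (m1 ++ m2). split; [apply Good_app; auto|]. intros x [hx|hx].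
      + destruct (H1 x hx) as [q [h1 h2]]. exists q. split; [apply in_or_app; left; exact h1|exact h2].
      + destruct (H2 x hx) as [q [h1 h2]]. exists q. split; [apply in_or_app; right; exact h1|exact h2]. }
  destruct (PF K O HK LO) as [[_ E]|[y [M Hn]]]; [exact E|].
  exfalso. apply Hn.
  destruct (basis_interp b (f y) (H y M)) as [c [Dc [W1 W2]]].
  destruct (cont_wb c y W2) as [V [LV [MV HV]]].
  apply (cp_of_models y K V HK); [|exact MV].
  split; [exact LV|]. exists [(V, c)]. split.
  - intros q [E|[]]; subst; simpl; auto.
  - intros x hx. exists (V, c). split; [left; reflexivity|split; [exact hx|exact W1]].
Qed.

Lemma cover_list (l : list ((X -> Prop) * D)) : LL l ->
  (forall p, In p l -> forall y, models y (fst p) -> way_below le (snd p) (f y)) ->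
  exists m, Good m /\ forall p, In p l -> forall x, fst p x ->
     exists q, In q m /\ fst q x /\ way_below le (snd p) (snd q).
Proof.
  induction l as [|a l IH]; intros Hl Hw.
  - exists []. split; [intros q []|intros p []].
  - destruct (LL_cons a l Hl) as [La Ll].
    destruct IH as [m1 [G1 H1]]; [exact Ll|intros p hp; apply Hw; right; exact hp|].
    destruct (CL (fst a) (snd a) La (Hw a (or_introl eq_refl))) as [m2 [G2 H2]].
    exists (m1 ++ m2). split; [apply Good_app; auto|]. intros p [E|hp] x hx.
    + subst p. destruct (H2 x hx) as [q [h1 h2]]. exists q. split; [apply in_or_app; right; exact h1|exact h2].
    + destruct (H1 p hp x hx) as [q [h1 h2]]. exists q. split; [apply in_or_app; left; exact h1|exact h2].
Qed.

Lemma Good_step m : Good m -> consistent le m /\ (forall p, In p m -> Om0 (fst p) /\ D0 (snd p)).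
Proof.
  intros G. split.
  - intros J HJ [x Hx]. exists (f (ptx x)). intros b [p [Jp E]]. subst b.
    destruct (G p (HJ p Jp)) as [L1 [_ W]]. apply wb_le, W.
    apply (proj2 (models_ptx x (fst p) L1)), Hx, Jp.
  - intros p hp. destruct (G p hp) as [h1 [h2 _]]; auto.
Qed.

Lemma psi_round : rounded_ideal Om0 le D0 psiR.
Proof.
  split; [|split; [|split]].
  - intros h [l [Hr _]]. exists l; exact Hr.
  - exists (stepf []). exists []. split; [apply stepf_repr|intros p []].
    + intros J HJ _. exists bot. intros b [p [Jp _]]. destruct (HJ p Jp).
    + intros p [].
  - intros h h' [lh [Hrh Hwh]] _ [l' [Hr' Hw']]. exists l'. split; [exact Hr'|].
    intros p hp y M.
    destruct (generic y (fst p) lh (repr_LL lh h Hrh) (repr_LL l' h' Hr' p hp) M)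
      as [x0 [O' [L' [M' [S' [Hx0 [G1 G2]]]]]]].
    apply (wb_mono (snd p) (snd p) (h x0) (f y)); [apply Hrefl|apply Hw'; auto|].
    apply (value_le lh); [exact Hrh|]. intros q hq hx. apply wb_le, Hwh; auto.
  - intros g1 g2 [l1 [Hr1 Hw1]] [l2 [Hr2 Hw2]].
    destruct (cover_list (l1 ++ l2)) as [m [Gm Hm]].
    + intros p hp. destruct (in_app_or _ _ _ hp); [apply (repr_LL l1 g1)|apply (repr_LL l2 g2)]; auto.
    + intros p hp. destruct (in_app_or _ _ _ hp); auto.
    + destruct (Good_step m Gm) as [Hc Hm2].
      exists (stepf m). split; [|split].
      * exists m. split; [apply stepf_repr; auto|]. intros q hq y M. apply (Gm q hq), M.
      * exists l1. split; [exact Hr1|]. intros p hp x hx.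
        destruct (Hm p (in_or_app _ _ _ (or_introl hp)) x hx) as [q [hq [hqx W]]].
        apply (wb_mono (snd p) (snd p) (snd q)); [apply Hrefl|exact W|apply stepf_ge; auto].
      * exists l2. split; [exact Hr2|]. intros p hp x hx.
        destruct (Hm p (in_or_app _ _ _ (or_intror hp)) x hx) as [q [hq [hqx W]]].
        apply (wb_mono (snd p) (snd p) (snd q)); [apply Hrefl|exact W|apply stepf_ge; auto].
Qed.

End PsiPart.

Lemma sig_eq {A : Type} {P : A -> Prop} (a b : {x | P x}) : proj1_sig a = proj1_sig b -> a = b.
Proof. destruct a as [a pa], b as [b pb]; simpl; intros E; subst; f_equal; apply proof_irrelevance. Qed.

Lemma main_sec : exists (phi : RIC Om0 le D0 -> ContFun Om0 le)
         (psi : ContFun Om0 le -> RIC Om0 le D0),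
    (forall R, psi (phi R) = R) /\
    (forall f, phi (psi f) = f) /\
    (forall R1 R2 : RIC Om0 le D0,
       subset (proj1_sig R1) (proj1_sig R2) <->
       (forall y, le (proj1_sig (phi R1) y) (proj1_sig (phi R2) y))).
Proof.
  exists (fun R => exist _ (phiv (proj1_sig R)) (phi_cont _ (proj2_sig R))).
  exists (fun F => exist _ (psiR (proj1_sig F)) (psi_round (proj1_sig F) (proj2_sig F))).
  split; [|split].
  - intros [R HR]. apply sig_eq; simpl. apply set_ext; intros g. split.
    + apply R_of_tri, HR.
    + apply tri_of_R, HR.
  - intros [F HF]. apply sig_eq; simpl. apply functional_extensionality; intros y.
    apply Hanti.
    + apply (proj2 (phiv_sup _ y (psi_round F HF))). intros d Hd. apply (C1 F y d Hd).
    + apply (C2 F HF y). apply SR_dir, psi_round, HF.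
  - intros [R1 H1] [R2 H2]; simpl. split.
    + intros S y. apply (proj2 (phiv_sup R1 y H1)). intros d [h [Rh Ho]].
      apply (proj1 (phiv_sup R2 y H2)). exists h; split; [apply S, Rh|exact Ho].
    + intros Hle g Rg. apply (R_of_tri R2 g H2).
      destruct (tri_of_R R1 g H1 Rg) as [l [Hr Hw]]. exists l. split; [exact Hr|].
      intros p hp y M. apply (wb_mono (snd p) (snd p) (phiv R1 y)); [apply Hrefl|apply Hw; auto|apply Hle].
Qed.

End Main.

Theorem mainTheorem19 (X : Type) (opn : (X -> Prop) -> Prop)
  (Om0 : (X -> Prop) -> Prop) (D : Type) (le : D -> D -> Prop) (D0 : D -> Prop) :
  is_topology opn -> viable_base opn Om0 ->
  bc_domain le -> is_basis le D0 ->
  exists (phi : RIC Om0 le D0 -> ContFun Om0 le)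
         (psi : ContFun Om0 le -> RIC Om0 le D0),
    (forall R, psi (phi R) = R) /\
    (forall f, phi (psi f) = f) /\
    (forall R1 R2 : RIC Om0 le D0,
       subset (proj1_sig R1) (proj1_sig R2) <->
       (forall y, le (proj1_sig (phi R1) y) (proj1_sig (phi R2) y))).
Proof.
  intros _ [_ [HL0 [HL1 [HLU [HLI _]]]]] [Hrefl [Hanti [Htrans [[bot Hbot] [Hdsup [_ Hbsup]]]]]] Hbas.
  exact (main_sec X Om0 HL0 HL1 HLU HLI D le D0 bot Hrefl Hanti Htrans Hbot Hdsup Hbsup Hbas).
Qed.
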